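(* Let $(D,\mathrm{left},\mathrm{right})$ be an interval domain and $p,q\in\max(D)$. (i) If $S\subseteq[p,\cdot]$ is directed, then $\mathrm{right}(\bigsqcup S)=\bigwedge_{s\in S}\mathrm{right}(s)$, the infimum taken in $(\max(D),\le)$. (ii) If $S\subseteq[\cdot,q]$ is directed, then $\mathrm{left}(\bigsqcup S)=\bigvee_{s\in S}\mathrm{left}(s)$, the supremum taken in $(\max(D),\le)$.
   Context: For a poset $(P,\sqsubseteq)$: directed sets are nonempty sets in which any two elements have an upper bound in the set; $\bigsqcup S$ is the supremum; $x\ll y$ iff for every directed $S\subseteq P$ with a supremum, $y\sqsubseteq\bigsqcup S$ implies $x\sqsubseteq s$ for some $s\in S$; $\Uparrow x=\{a: x\ll a\}$, $\Downarrow x=\{a:a\ll x\}$. $P$ is continuous if there is $B\subseteq P$ such that for each $x$, $B\cap\Downarrow x$ contains a directed set with supremum $x$; a continuous dcpo is a continuous poset in which every directed set has a supremum. $\max(P)$ is the set of maximal elements, $x\sqcap y$ the infimum of $\{x,y\}$. The Scott topology consists of upper sets $U$ such that $\bigsqcup S\in U$ implies $S\cap U\ne\emptyset$ for directed $S$. An interval poset is a poset $D$ with functions $\mathrm{left},\mathrm{right}:D\to\max(D)$ such that (only named infima are assumed to exist): (i) $x=\mathrm{left}(x)\sqcap\mathrm{right}(x)$ for all $x$; (ii) if $\mathrm{right}(x)=\mathrm{left}(y)$ then $\mathrm{left}(x\sqcap y)=\mathrm{left}(x)$ and $\mathrm{right}(x\sqcap y)=\mathrm{right}(y)$; (iii)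 for $p\in\max(D)$ with $x\sqsubseteq p$: $\mathrm{left}(\mathrm{left}(x)\sqcap p)=\mathrm{left}(x)$, $\mathrm{right}(\mathrm{left}(x)\sqcap p)=p$, $\mathrm{left}(p\sqcap\mathrm{right}(x))=p$, $\mathrm{right}(p\sqcap\mathrm{right}(x))=\mathrm{right}(x)$. On $\max(D)$ define $a\le b$ iff $a=\mathrm{left}(z)$, $b=\mathrm{right}(z)$ for some $z\in D$; this is a partial order. For $p,q\in\max(D)$ let $[p,\cdot]=\mathrm{left}^{-1}(p)$ and $[\cdot,q]=\mathrm{right}^{-1}(q)$, regarded as subposets of $D$. An interval domain is an interval poset $(D,\mathrm{left},\mathrm{right})$ such that $D$ is a continuous dcpo and: (i) if $p\in\Uparrow x\cap\max(D)$ then $\Uparrow(\mathrm{left}(x)\sqcap p)\ne\emptyset$ and $\Uparrow(p\sqcap\mathrm{right}(x))\ne\emptyset$; (ii) for all $x\in D$ the following are equivalent: (a) $\Uparrow x\ne\emptyset$; (b) for all $y\in[\mathrm{left}(x),\cdot]$ with $y\sqsubseteq x$, $y\ll\mathrm{right}(y)$ in the poset $[\cdot,\mathrm{right}(y)]$; (c) for all $y\in[\cdot,\mathrm{right}(x)]$ with $y\sqsubseteq x$, $y\ll\mathrm{left}(y)$ in the poset $[\mathrm{left}(y),\cdot]$; (iii)(a) for every directed $S\subseteq[p,\cdot]$, $\mathrm{left}(\bigsqcup S)=p$ and $\mathrm{right}(\bigsqcup S)=\mathrm{right}(\bigsqcup T)$ for every directed $T\subseteq[q,\cdot]$ with $\mathrm{right}(T)=\mathrm{right}(S)$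 (images); (iii)(b) for every directed $S\subseteq[\cdot,q]$, $\mathrm{right}(\bigsqcup S)=q$ and $\mathrm{left}(\bigsqcup S)=\mathrm{left}(\bigsqcup T)$ for every directed $T\subseteq[\cdot,p]$ with $\mathrm{left}(T)=\mathrm{left}(S)$; (iv) for all $x\in D$, $\{y\in\max(D): x\sqsubseteq y\}$ is compact in the relative Scott topology. *)

(* Defs.v *)
From Stdlib Require Import List.

Section PosetDefs.
Variable T : Type.
Variable le : T -> T -> Prop.

Definition is_partial_order : Prop :=
  (forall x, le x x) /\
  (forall x y, le x y -> le y x -> x = y) /\
  (forall x y z, le x y -> le y z -> le x z).

Definition upper_bound (S : T -> Prop) (u : T) : Prop :=
  forall s, S s -> le s u.

Definition is_sup (S : T -> Prop) (u : T) : Prop :=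
  upper_bound S u /\ forall v, upper_bound S v -> le u v.

Definition is_sup_in (A : T -> Prop) (S : T -> Prop) (u : T) : Prop :=
  A u /\ upper_bound S u /\ forall v, A v -> upper_bound S v -> le u v.

Definition is_inf2 (x y z : T) : Prop :=
  le z x /\ le z y /\ forall w, le w x -> le w y -> le w z.

Definition directed (S : T -> Prop) : Prop :=
  (exists s, S s) /\
  forall x y, S x -> S y -> exists z, S z /\ le x z /\ le y z.

Definition way_below_in (A : T -> Prop) (x y : T) : Prop :=
  forall S : T -> Prop, (forall s, S s -> A s) -> directed S ->
  forall u, is_sup_in A S u -> le y u -> exists s, S s /\ le x s.

Definition way_below (x y : T) : Prop := way_below_in (fun _ => True) x y.

Definition maximal (x : T) : Prop := forall y, le x y -> y = x.

Definition continuous_poset : Prop :=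
  exists B : T -> Prop, forall x, exists S : T -> Prop,
    (forall s, S s -> B s /\ way_below s x) /\ directed S /\ is_sup S x.

Definition dcpo_complete : Prop :=
  forall S, directed S -> exists u, is_sup S u.

Definition scott_open (U : T -> Prop) : Prop :=
  (forall x y, U x -> le x y -> U y) /\
  (forall S u, directed S -> is_sup S u -> U u -> exists s, S s /\ U s).

Definition scott_compact (K : T -> Prop) : Prop :=
  forall F : (T -> Prop) -> Prop,
    (forall U, F U -> scott_open U) ->
    (forall k, K k -> exists U, F U /\ U k) ->
    exists l : list (T -> Prop),
      (forall U, In U l -> F U) /\ (forall k, K k -> exists U, In U l /\ U k).

Definition image (f : T -> T) (S : T -> Prop) : T -> Prop :=
  fun b => exists s, S s /\ b = f s.

Variables left right : T -> T.

Definition interval_poset : Prop :=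
  is_partial_order /\
  (forall x, maximal (left x)) /\ (forall x, maximal (right x)) /\
  (forall x, is_inf2 (left x) (right x) x) /\
  (forall x y, right x = left y ->
     exists z, is_inf2 x y z /\ left z = left x /\ right z = right y) /\
  (forall p x, maximal p -> le x p ->
     (exists z, is_inf2 (left x) p z /\ left z = left x /\ right z = p) /\
     (exists z, is_inf2 p (right x) z /\ left z = p /\ right z = right x)).

(* [p,.] and [.,q] *)
Definition lsec (p : T) : T -> Prop := fun x => left x = p.
Definition rsec (q : T) : T -> Prop := fun x => right x = q.

Definition same_set (A B : T -> Prop) : Prop := forall x, A x <-> B x.

Definition interval_domain : Prop :=
  interval_poset /\ continuous_poset /\ dcpo_complete /\
  (forall x p, maximal p -> way_below x p ->
     (forall z, is_inf2 (left x) p z -> exists a, way_below z a) /\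
     (forall z, is_inf2 p (right x) z -> exists a, way_below z a)) /\
  (forall x,
     ((exists a, way_below x a) <->
      (forall y, lsec (left x) y -> le y x ->
         way_below_in (rsec (right y)) y (right y))) /\
     ((exists a, way_below x a) <->
      (forall y, rsec (right x) y -> le y x ->
         way_below_in (lsec (left y)) y (left y)))) /\
  (* (iii)(a) *)
  (forall p q, maximal p -> maximal q ->
     forall S s, directed S -> (forall x, S x -> lsec p x) -> is_sup S s ->
       left s = p /\
       forall U u, directed U -> (forall x, U x -> lsec q x) -> is_sup U u ->
         same_set (image right U) (image right S) -> right s = right u) /\
  (* (iii)(b) *)
  (forall p q, maximal p -> maximal q ->
     forall S s, directed S -> (forall x, S x -> rsec q x) -> is_sup S s ->
       right s = q /\
       forall U u, directed U -> (forall x, U x -> rsec p x) -> is_sup U u ->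
         same_set (image left U) (image left S) -> left s = left u) /\
  (forall x, scott_compact (fun y => maximal y /\ le x y)).

(* the order <= on max(D) *)
Definition max_le (a b : T) : Prop := exists z, a = left z /\ b = right z.

Definition is_inf_max (X : T -> Prop) (a : T) : Prop :=
  maximal a /\ (forall b, X b -> max_le a b) /\
  (forall c, maximal c -> (forall b, X b -> max_le c b) -> max_le c a).

Definition is_sup_max (X : T -> Prop) (a : T) : Prop :=
  maximal a /\ (forall b, X b -> max_le b a) /\
  (forall c, maximal c -> (forall b, X b -> max_le b c) -> max_le a c).

End PosetDefs.

Arguments is_partial_order {T}. Arguments upper_bound {T}. Arguments is_sup {T}.
Arguments is_sup_in {T}. Arguments is_inf2 {T}. Arguments directed {T}.
Arguments way_below_in {T}. Arguments way_below {T}. Arguments maximal {T}.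
Arguments continuous_poset {T}. Arguments dcpo_complete {T}.
Arguments scott_open {T}. Arguments scott_compact {T}. Arguments image {T}.
Arguments interval_poset {T}. Arguments lsec {T}. Arguments rsec {T}.
Arguments same_set {T}. Arguments interval_domain {T}. Arguments max_le {T}.
Arguments is_inf_max {T}. Arguments is_sup_max {T}.

(* Main.v *)
Require Import Defs.

Theorem mainTheorem10 :
  forall (T : Type) (le : T -> T -> Prop) (left right : T -> T),
    interval_domain le left right ->
    forall p q : T, maximal le p -> maximal le q ->
    (forall (S : T -> Prop) (s : T),
        directed le S -> (forall x, S x -> lsec left p x) -> is_sup le S s ->
        is_inf_max le left right (image right S) (right s)) /\
    (forall (S : T -> Prop) (s : T),
        directed le S -> (forall x, S x -> rsec right q x) -> is_sup le S s ->
        is_sup_max le left right (image left S) (left s)).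
Proof.
  intros T le left right H p q Hp Hq.
  destruct H as [IP [CP [DC [Hi [Hii [H3a [H3b Hiv]]]]]]].
  destruct IP as [PO [Hml [Hmr [Hinf [Hcat Hext]]]]].
  destruct PO as [Hrefl [Hanti Htrans]].
  assert (Huniq : forall a b, left a = left b -> right a = right b -> a = b).
  { intros a b E1 E2. destruct (Hinf a) as [a1 [a2 a3]].
    destruct (Hinf b) as [b1 [b2 b3]]. apply Hanti.
    - apply b3; [rewrite <- E1 | rewrite <- E2]; assumption.
    - apply a3; [rewrite E1 | rewrite E2]; assumption. }
  split.
  - intros S s HD HS Hs.
    destruct Hs as [Hub Hlub].
    assert (Hs' : is_sup le S s) by (split; assumption).
    split; [apply Hmr|]. split.
    + intros b [x [Sx ->]].
      assert (Hxr : le x (right s)).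
      { apply Htrans with s; [apply Hub; auto | apply (Hinf s)]. }
      destruct (Hext (right s) x (Hmr s) Hxr) as [_ [z [_ [E1 E2]]]].
      exists z. auto.
    + intros c Hc Hall.
      set (U := fun z => left z = c /\ exists x, S x /\ right z = right x).
      assert (HU : directed le U).
      { destruct HD as [[x0 Sx0] HD2]. split.
        - destruct (Hall (right x0)) as [z [E1 E2]]; [exists x0; auto|].
          exists z. split; [auto | exists x0; auto].
        - intros z1 z2 [L1 [x1 [Sx1 R1]]] [L2 [x2 [Sx2 R2]]].
          destruct (HD2 x1 x2 Sx1 Sx2) as [w [Sw [Lw1 Lw2]]].
          destruct (Hall (right w)) as [zw [E1 E2]]; [exists w; auto|].
          assert (Hzw : U zw) by (split; [auto | exists w; auto]).
          assert (Key : forall z x, left z = c -> S x -> right z = right x ->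
                    le x w -> le z zw).
          { intros z x L Sx R Lxw.
            assert (Hxr : le x (right w))
              by (apply Htrans with w; [auto | apply (Hinf w)]).
            destruct (Hext (right w) x (Hmr w) Hxr) as [_ [y [_ [Ey1 Ey2]]]].
            destruct (Hcat zw y) as [m [[m1 [m2 m3]] [Em1 Em2]]].
            { rewrite Ey1; auto. }
            assert (z = m) as ->.
            { apply Huniq; [rewrite Em1, L; auto | rewrite Em2, Ey2; auto]. }
            auto. }
          exists zw. split; [auto | split].
          + apply (Key z1 x1); auto.
          + apply (Key z2 x2); auto. }
      destruct (DC U HU) as [u Hu].
      assert (HUl : forall x, U x -> lsec left c x) by (intros x [Lx _]; exact Lx).
      destruct (H3a c c Hc Hc U u HU HUl Hu) as [Lu _].
      destruct (H3a p c Hp Hc S s HD HS Hs') as [_ Hr].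
      exists u. split; [auto|].
      apply (Hr U u HU HUl Hu).
      intros b; split.
      * intros [z [[_ [x [Sx Rz]]] ->]]. exists x. auto.
      * intros [x [Sx ->]].
        destruct (Hall (right x)) as [z [E1 E2]]; [exists x; auto|].
        exists z. split; [split; [auto | exists x; auto] | auto].
  - intros S s HD HS Hs.
    destruct Hs as [Hub Hlub].
    assert (Hs' : is_sup le S s) by (split; assumption).
    split; [apply Hml|]. split.
    + intros b [x [Sx ->]].
      assert (Hxl : le x (left s)).
      { apply Htrans with s; [apply Hub; auto | apply (Hinf s)]. }
      destruct (Hext (left s) x (Hml s) Hxl) as [[z [_ [E1 E2]]] _].
      exists z. auto.
    + intros c Hc Hall.
      set (U := fun z => right z = c /\ exists x, S x /\ left z = left x).
      assert (HU : directed le U).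
      { destruct HD as [[x0 Sx0] HD2]. split.
        - destruct (Hall (left x0)) as [z [E1 E2]]; [exists x0; auto|].
          exists z. split; [auto | exists x0; auto].
        - intros z1 z2 [L1 [x1 [Sx1 R1]]] [L2 [x2 [Sx2 R2]]].
          destruct (HD2 x1 x2 Sx1 Sx2) as [w [Sw [Lw1 Lw2]]].
          destruct (Hall (left w)) as [zw [E1 E2]]; [exists w; auto|].
          assert (Hzw : U zw) by (split; [auto | exists w; auto]).
          assert (Key : forall z x, right z = c -> S x -> left z = left x ->
                    le x w -> le z zw).
          { intros z x L Sx R Lxw.
            assert (Hxl : le x (left w))
              by (apply Htrans with w; [auto | apply (Hinf w)]).
            destruct (Hext (left w) x (Hml w) Hxl) as [[y [_ [Ey1 Ey2]]] _].
            destruct (Hcat y zw) as [m [[m1 [m2 m3]] [Em1 Em2]]].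
            { rewrite Ey2; auto. }
            assert (z = m) as ->.
            { apply Huniq; [rewrite Em1, Ey1; auto | rewrite Em2, L; auto]. }
            auto. }
          exists zw. split; [auto | split].
          + apply (Key z1 x1); auto.
          + apply (Key z2 x2); auto. }
      destruct (DC U HU) as [u Hu].
      assert (HUr : forall x, U x -> rsec right c x) by (intros x [Rx _]; exact Rx).
      destruct (H3b c c Hc Hc U u HU HUr Hu) as [Ru _].
      destruct (H3b c q Hc Hq S s HD HS Hs') as [_ Hr].
      exists u. split; [|auto].
      apply (Hr U u HU HUr Hu).
      intros b; split.
      * intros [z [[_ [x [Sx Rz]]] ->]]. exists x. auto.
      * intros [x [Sx ->]].
        destruct (Hall (left x)) as [z [E1 E2]]; [exists x; auto|].
        exists z. split; [split; [auto | exists x; auto] | auto].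
Qed.
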